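(* Let $T=(V,E)$ be a tree with $\mathrm{pthin}(T)=2$, and let $\sigma$ be an ordering of $V$ and $S=\{V^0,V^1\}$ a partition of $V$ that are strongly consistent. Let $v_1,v_2,v_3$ be vertices with $v_1<v_2<v_3$ and $\deg(v_2)=3$. If a vertex $v_0$ is the nexus between $v_1,v_2,v_3$, then $v_0$ is adjacent to $v_2$.
   Context: For a graph $G=(V,E)$, a linear ordering $<$ of $V$ and a partition of $V$ into classes are called strongly consistent if for every triple $r<s<t$ of vertices with $rt\in E$: if $r$ and $s$ belong to the same class then $st\in E$, and if $s$ and $t$ belong to the same class then $rs\in E$. The proper thinness $\mathrm{pthin}(G)$ is the minimum $k$ such that some ordering and some partition into $k$ classes are strongly consistent. For distinct vertices $v_0,v_1,v_2,v_3$ of a tree $T$, let $C_i$ be the unique simple path from $v_0$ to $v_i$ ($i=1,2,3$) and $C_i'$ its vertex set minus $v_0$; $v_0$ is the nexus between $v_1,v_2,v_3$ if $C_1',C_2',C_3'$ are pairwise disjoint. *)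

(* Defs.v *)
From mathcomp Require Import all_boot.
Set Implicit Arguments. Unset Strict Implicit. Unset Printing Implicit Defensive.

Definition simple_graph (T : finType) (e : rel T) : Prop :=
  symmetric e /\ irreflexive e.

Definition is_tree (T : finType) (e : rel T) : Prop :=
  simple_graph e /\
  (forall x y : T, connect e x y) /\
  (forall s : seq T, uniq s -> 3 <= size s -> ~~ cycle e s).

Definition deg (T : finType) (e : rel T) (x : T) : nat := #|[set y | e x y]|.

(* A linear ordering of V is represented by an injective rank function
   ord : T -> nat, with x < y iff ord x < ord y; a partition into k classes
   by a class map c : T -> 'I_k. *)
Definition strongly_consistent (T : finType) (e : rel T) (k : nat)
  (ord : T -> nat) (c : T -> 'I_k) : Prop :=
  forall r s t : T, ord r < ord s -> ord s < ord t -> e r t ->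
    (c r = c s -> e s t) /\ (c s = c t -> e r s).

Definition pthin_ok (T : finType) (e : rel T) (k : nat) : Prop :=
  exists (ord : T -> nat) (c : T -> 'I_k),
    injective ord /\ strongly_consistent e ord c.

Definition pthin_eq (T : finType) (e : rel T) (k : nat) : Prop :=
  pthin_ok e k /\ forall k', pthin_ok e k' -> k <= k'.

(* p is a simple path from x to y, listing the vertices after x:
   x :: p is a uniq e-path ending at y.  Its vertex set minus x is p. *)
Definition simple_path (T : finType) (e : rel T) (x y : T) (p : seq T) : bool :=
  [&& path e x p, last x p == y & uniq (x :: p)].

Definition nexus (T : finType) (e : rel T) (v0 v1 v2 v3 : T) : Prop :=
  uniq [:: v0; v1; v2; v3] /\
  forall p1 p2 p3 : seq T,
    simple_path e v0 v1 p1 -> simple_path e v0 v2 p2 -> simple_path e v0 v3 p3 ->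
    [/\ [disjoint p1 & p2], [disjoint p1 & p3] & [disjoint p2 & p3]].

(* Main.v *)
Require Import Defs.
From mathcomp Require Import all_boot zify.
Set Implicit Arguments. Unset Strict Implicit.

Lemma prefixP (T : eqType) (e : rel T) x p u :
  path e x p -> uniq (x :: p) -> u \in p ->
  exists q, [/\ path e x q, last x q = u, uniq (x :: q), u \in q & {subset q <= p}].
Proof.
move=> Hp Hu Hm; case/splitPr: Hm Hp Hu => p1 p2 Hp Hu.
exists (rcons p1 u); split.
- move: Hp; rewrite cat_path rcons_path /= => /and3P[-> -> _] //.
- by rewrite last_rcons.
- move: Hu; rewrite -cats1 -!cat_cons !cat_uniq /= !orbF !andbT.
  by case/and3P=> -> /norP[-> _] _.
- by rewrite mem_rcons mem_head.
- by move=> y; rewrite mem_rcons mem_cat !inE => /orP[->|->]; rewrite ?orbT.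
Qed.

Lemma I2 (a b d : 'I_2) : a <> d -> b <> d -> a = b.
Proof.
move=> H1 H2; apply: val_inj; clear -H1 H2.
have Ha := ltn_ord a; have Hb := ltn_ord b; have Hd := ltn_ord d.
have H1' : nat_of_ord a <> nat_of_ord d by move=> /val_inj.
have H2' : nat_of_ord b <> nat_of_ord d by move=> /val_inj.
move: Ha Hb Hd H1' H2'; clear H1 H2; case: a b d => [a ?] [b ?] [d ?] /=; lia.
Qed.

Lemma no_tri (T : finType) (e : rel T) a b d :
  is_tree e -> e a b -> e b d -> e d a -> False.
Proof.
case=> [[sym irr] [_ acyc]] Hab Hbd Hda.
have nab : a != b by apply: contraTneq Hab => ->; rewrite irr.
have nbd : b != d by apply: contraTneq Hbd => ->; rewrite irr.
have nda : d != a by apply: contraTneq Hda => ->; rewrite irr.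
have H := acyc [:: a; b; d].
move: H; rewrite /= !inE negb_or nab eq_sym nda nbd Hab Hbd Hda.
by move=> /(_ isT isT).
Qed.

Lemma core (T : finType) (e : rel T) (ord : T -> nat) (c : T -> 'I_2) r t v2 :
  is_tree e -> injective ord -> strongly_consistent e ord c -> deg e v2 = 3 ->
  ord r < ord v2 -> ord v2 < ord t -> e r t -> ~~ e v2 r -> ~~ e v2 t -> False.
Proof.
move=> Htr Hinj Hsc Hdeg Hr Ht Hrt Hnr Hnt.
have [sym irr] := Htr.1.
have [Hsc1 Hsc2] := Hsc r v2 t Hr Ht Hrt.
have crv : c r <> c v2 by move=> /Hsc1; rewrite (negbTE Hnt).
have ctv : c t <> c v2 by move=> /esym /Hsc2; rewrite sym (negbTE Hnr).
have crt : c r = c t := I2 crv ctv.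
have nb : forall x, e v2 x -> c x = c v2.
  move=> x Hx.
  have xr : ord x != ord r by apply: contraTneq Hx => /Hinj ->.
  have xt : ord x != ord t by apply: contraTneq Hx => /Hinj ->.
  have Hxv : e x v2 by rewrite sym.
  have cxr : c x <> c r.
    move=> cxr.
    case: (ltngtP (ord x) (ord r)) xr => // [xlr|rlx] _.
      have [H1 _] := Hsc x r v2 xlr Hr Hxv.
      by move: (H1 cxr); rewrite sym (negbTE Hnr).
    case: (ltngtP (ord x) (ord t)) xt => // [xlt|tlx] _.
      have [H1 H2] := Hsc r x t rlx xlt Hrt.
      have Hxt := H1 (esym cxr).
      have Hrx := H2 (etrans cxr crt).
      by apply: (no_tri Htr Hrx Hxt); rewrite sym.
    have [_ H2] := Hsc v2 t x Ht tlx Hx.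
    by move: (H2 (etrans (esym crt) (esym cxr))); rewrite (negbTE Hnt).
  exact: I2 cxr (fun h => crv (esym h)).
have side : forall x y, e v2 x -> e v2 y -> x != y ->
    ~ (ord x < ord v2 /\ ord y < ord v2) /\ ~ (ord v2 < ord x /\ ord v2 < ord y).
  move=> x y Hx Hy nxy.
  have nxy' : ord x != ord y by apply: contra nxy => /eqP /Hinj ->.
  have cx := nb x Hx; have cy := nb y Hy.
  have Hxv : e x v2 by rewrite sym.
  have Hyv : e y v2 by rewrite sym.
  have nexy : ~~ e x y by apply/negP => Hxy; apply: (no_tri Htr Hx Hxy Hyv).
  have neyx : ~~ e y x by rewrite sym.
  split; case=> H1 H2; case: (ltngtP (ord x) (ord y)) nxy' => // Hxy _.
  - have [_ H] := Hsc x y v2 Hxy H2 Hxv; by move: (H cy); rewrite (negbTE nexy).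
  - have [_ H] := Hsc y x v2 Hxy H1 Hyv; by move: (H cx); rewrite (negbTE neyx).
  - have [H _] := Hsc v2 x y H1 Hxy Hy; by move: (H (esym cx)); rewrite (negbTE nexy).
  - have [H _] := Hsc v2 y x H2 Hxy Hx; by move: (H (esym cy)); rewrite (negbTE neyx).
have := enum_uniq [set y | e v2 y].
have Hmem : forall y, y \in enum [set y | e v2 y] -> e v2 y.
  by move=> y; rewrite mem_enum inE.
move: Hdeg Hmem; rewrite /deg cardE.
case: (enum _) => [|x [|y [|z [|]]]] //= _ Hmem.
rewrite !inE !negb_or !andbT.
move=> /andP[/andP[nxy nxz] nyz].
have Hx : e v2 x by apply: Hmem; rewrite !inE eqxx.
have Hy : e v2 y by apply: Hmem; rewrite !inE eqxx orbT.
have Hz : e v2 z by apply: Hmem; rewrite !inE eqxx !orbT.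
have ne : forall w, e v2 w -> ord w != ord v2.
  by move=> w Hw; apply: contraTneq Hw => /Hinj ->; rewrite irr.
have := ne x Hx; have := ne y Hy; have := ne z Hz.
have := side x y Hx Hy nxy; have := side x z Hx Hz nxz; have := side y z Hy Hz nyz.
move=> ? ? ? /eqP ? /eqP ? /eqP ?; lia.
Qed.

Lemma cross (T : eqType) (e : rel T) (f : pred T) x p :
  path e x p -> ~~ f x -> f (last x p) ->
  exists u w, [/\ u \in x :: p, w \in x :: p, e u w, ~~ f u & f w].
Proof.
elim: p x => [|y p IH] x /=; first by move=> _ /negbTE ->.
case/andP=> Hxy Hp Hfx Hl.
case Hfy: (f y).
  by exists x, y; rewrite !inE !eqxx ?orbT Hfy Hxy.
have [u [w [Hu Hw Huw Hfu Hfw]]] := IH y Hp (negbT Hfy) Hl.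
by exists u, w; split => //; rewrite inE ?Hu ?Hw orbT.
Qed.

Lemma avoid (T : finType) (e : rel T) x w v2 p :
  symmetric e -> simple_path e x w p ->
  (forall q, simple_path e x v2 q -> [disjoint p & q]) -> x != v2 ->
  v2 \notin p /\ forall u, u \in p -> ~~ e u v2.
Proof.
move=> sym /and3P[Hp _ Hu] Hd nxv.
have nv : v2 \notin p.
  apply/negP => Hv.
  have [q [Hq Hlq Huq Hvq _]] := prefixP Hp Hu Hv.
  have := Hd q; rewrite /simple_path Hq Hlq eqxx Huq => /(_ isT) Hdj.
  by move: (disjointFr Hdj Hv); rewrite Hvq.
split => // u Hup; apply/negP => Huv.
have [q [Hq Hlq Huq Huq' Hsub]] := prefixP Hp Hu Hup.
have Hq2 : simple_path e x v2 (rcons q v2).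
  rewrite /simple_path rcons_path Hq Hlq Huv last_rcons eqxx /=.
  rewrite rcons_uniq mem_rcons !inE negb_or nxv /=.
  have /andP[Hxq Huq0] : (x \notin q) && uniq q := Huq.
  rewrite Hxq Huq0 ?andbT.
  by apply/negP => /Hsub; apply/negP.
have := Hd _ Hq2 => Hdj.
by move: (disjointFr Hdj Hup); rewrite mem_rcons inE Huq' orbT.
Qed.

Lemma spath (T : finType) (e : rel T) x y :
  is_tree e -> exists p, simple_path e x y p.
Proof.
move=> Htr; have := Htr.2.1 x y => /connectP[p Hp ->].
case: (shortenP Hp) => p' Hp' Hu _; exists p'.
by rewrite /simple_path Hp' eqxx Hu.
Qed.

Theorem corollaryA11 (T : finType) (e : rel T) :
  is_tree e -> pthin_eq e 2 ->
  forall (ord : T -> nat) (c : T -> 'I_2),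
    injective ord -> strongly_consistent e ord c ->
  forall v0 v1 v2 v3 : T,
    ord v1 < ord v2 -> ord v2 < ord v3 -> deg e v2 = 3 ->
    nexus e v0 v1 v2 v3 -> e v0 v2.
Proof.
move=> Htr _ ord c Hinj Hsc v0 v1 v2 v3 H12 H23 Hdeg [Hu Hnex].
case: (boolP (e v0 v2)) => // Hn; exfalso.
have [sym irr] := Htr.1.
have n02 : v0 != v2 by move: Hu; rewrite /= !inE !negb_or => /andP[/and3P[_ -> _] _].
have [p1 Hp1] := spath v0 v1 Htr.
have [p3 Hp3] := spath v0 v3 Htr.
have H1 : forall q, simple_path e v0 v2 q -> [disjoint p1 & q].
  by move=> q Hq; have [] := Hnex p1 q p3 Hp1 Hq Hp3.
have H3 : forall q, simple_path e v0 v2 q -> [disjoint p3 & q].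
  by move=> q Hq; have [_ _] := Hnex p1 q p3 Hp1 Hq Hp3; rewrite disjoint_sym.
have good : forall p w, simple_path e v0 w p ->
    (forall q, simple_path e v0 v2 q -> [disjoint p & q]) ->
    forall u, u \in v0 :: p -> u != v2 /\ ~~ e v2 u.
  move=> p w Hp Hd u; have [nv Hne] := avoid sym Hp Hd n02.
  rewrite inE => /orP[/eqP ->|Hup]; first by rewrite sym.
  split; first by apply: contraNneq nv => <-.
  by rewrite sym; apply: Hne.
have n02' : ord v0 != ord v2 by apply: contraNneq n02 => /Hinj ->.
case: (ltngtP (ord v0) (ord v2)) n02' => // Hlt _.
- have Hp3' := Hp3; case/and3P: Hp3' => Hpath /eqP Hl _.
  have Hf0 : ~~ (ord v2 < ord v0) by rewrite -leqNgt ltnW.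
  have Hfl : ord v2 < ord (last v0 p3) by rewrite Hl.
  have [u [w [Hu' Hw Huw Hfu Hfw]]] :=
    @cross _ e (fun u => ord v2 < ord u) v0 p3 Hpath Hf0 Hfl.
  have [nu Hnu] := good _ _ Hp3 H3 u Hu'.
  have [nw Hnw] := good _ _ Hp3 H3 w Hw.
  have Hul : ord u < ord v2.
    have : ord u != ord v2 by apply: contraNneq nu => /Hinj ->.
    by move: Hfu; rewrite -leqNgt leq_eqVlt => /orP[->|].
  exact: (core Htr Hinj Hsc Hdeg Hul Hfw Huw Hnu Hnw).
- have Hp1' := Hp1; case/and3P: Hp1' => Hpath /eqP Hl _.
  have Hf0 : ~~ (ord v0 < ord v2) by rewrite -leqNgt ltnW.
  have Hfl : ord (last v0 p1) < ord v2 by rewrite Hl.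
  have [u [w [Hu' Hw Huw Hfu Hfw]]] :=
    @cross _ e (fun u => ord u < ord v2) v0 p1 Hpath Hf0 Hfl.
  have [nu Hnu] := good _ _ Hp1 H1 u Hu'.
  have [nw Hnw] := good _ _ Hp1 H1 w Hw.
  have Hul : ord v2 < ord u.
    have : ord u != ord v2 by apply: contraNneq nu => /Hinj ->.
    by move: Hfu; rewrite -leqNgt leq_eqVlt eq_sym => /orP[->|].
  have Hwu : e w u by rewrite sym.
  exact: (core Htr Hinj Hsc Hdeg Hfw Hul Hwu Hnw Hnu).
Qed.
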